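(* Let $\gamma$ be a gauge on $\mathbb{R}^d$ with skewness $\sigma$ and let $v\in\mathrm{SD}_\gamma$. Let $A\subset\mathbb{R}^d$ be finite with positive weights $w_a$ satisfying $\sum_{a\in A}w_a=1$, let $C\subseteq A$ with $w_C=\sum_{c\in C}w_c>\frac{1}{1+\sigma}$, put $D=A\setminus C$, and let $U\subset\mathbb{R}^d$ be bounded. For $M>0$ let $f_M(x)=\sum_{d\in D}w_d\gamma(x-d)+\sum_{c\in C}w_c\gamma(x-(c-Mv))$ (the Fermat–Weber objective after replacing each $c\in C$ by $c-Mv$, weights unchanged). Then there is $M_0>0$ such that for all $M>M_0$ no minimizer of $f_M$ lies in $U$.
   Context: A gauge $\gamma$ on $\mathbb{R}^d$ is the Minkowski functional of a convex compact set $B_\gamma$ with the origin in its interior (not necessarily symmetric). Its skewness is $\sigma=\sup_{x\neq0}\gamma(x)/\gamma(-x)$ and $\mathrm{SD}_\gamma=\{v:\gamma(v)=\sigma\gamma(-v)=1\}$ (nonempty). *)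

(* Defs.v *)
From HB Require Import structures.
From mathcomp Require Import all_boot all_order all_algebra.
From mathcomp Require Import all_classical all_reals all_analysis.
Set Implicit Arguments. Unset Strict Implicit. Unset Printing Implicit Defensive.
Import Order.TTheory GRing.Theory Num.Theory.
Import numFieldNormedType.Exports.
Local Open Scope classical_set_scope.
Local Open Scope ring_scope.

Definition convex_body {R : realType} {d : nat} (B : set 'rV[R]_d) : Prop :=
  forall x y (t : R), B x -> B y -> 0 <= t <= 1 -> B (t *: x + (1 - t) *: y).

Definition gauge_body {R : realType} {d : nat} (B : set 'rV[R]_d) : Prop :=
  [/\ convex_body B, compact B & (interior B) 0].

Definition gauge_fun {R : realType} {d : nat} (B : set 'rV[R]_d)
  (x : 'rV[R]_d) : R :=
  inf [set t : R | 0 < t /\ exists2 b, B b & x = t *: b].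

Definition skewness {R : realType} {d : nat} (gamma : 'rV[R]_d -> R) : R :=
  sup [set gamma x / gamma (- x) | x in [set x : 'rV[R]_d | x != 0]].

Definition SD {R : realType} {d : nat} (gamma : 'rV[R]_d -> R) : set 'rV[R]_d :=
  [set v | gamma v = 1 /\ skewness gamma * gamma (- v) = 1].

(* Fermat--Weber objective after moving each point of C by -M v. The point set
   A = {a i | i : 'I_n} (a injective), C = {a i | i \in C}, D = A \ C. *)
Definition fM {R : realType} {d n : nat} (gamma : 'rV[R]_d -> R)
  (a : 'I_n -> 'rV[R]_d) (w : 'I_n -> R) (C : {set 'I_n})
  (v : 'rV[R]_d) (M : R) (x : 'rV[R]_d) : R :=
  \sum_(i < n | i \notin C) w i * gamma (x - a i)
  + \sum_(i < n | i \in C) w i * gamma (x - (a i - M *: v)).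

(* Main.v *)
Require Import Defs.
From HB Require Import structures.
From mathcomp Require Import all_boot all_order all_algebra.
From mathcomp Require Import all_classical all_reals all_analysis.
From mathcomp Require Import ring lra.
Import Order.TTheory GRing.Theory Num.Theory.
Import numFieldNormedType.Exports.
Local Open Scope classical_set_scope.
Local Open Scope ring_scope.

Section Gauge.
Variables (R : realType) (d : nat) (B : set 'rV[R]_d).
Hypothesis hB : gauge_body B.

Let S z := [set t : R | 0 < t /\ exists2 b, B b & z = t *: b].

Lemma gauge_ball : exists2 r : R, 0 < r & forall b : 'rV[R]_d, `|b| < r -> B b.
Proof.
case: hB => _ _ /nbhs_ballP [r r0 Hr]; exists r => // b hb; apply: Hr.
by rewrite -ball_normE /ball_ /= sub0r normrN.
Qed.

Lemma gauge_S z : forall r : R, 0 < r -> (forall b : 'rV[R]_d, `|b| < r -> B b) ->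
  S z (2 * (`|z| + 1) / r).
Proof.
move=> r r0 Hr; have zp : 0 < `|z| + 1 by rewrite ltr_wpDl.
have tp : 0 < 2 * (`|z| + 1) / r by rewrite divr_gt0 ?mulr_gt0.
split => //; exists ((2 * (`|z| + 1) / r)^-1 *: z); last first.
  by rewrite scalerA mulfV ?scale1r // gt_eqF.
apply: Hr; rewrite normrZ gtr0_norm ?invr_gt0 // invf_div.
rewrite mulrAC ltr_pdivrMr ?mulr_gt0 // ltr_pM2l //.
have := normr_ge0 z; lra.
Qed.

Lemma gauge_ne z : S z !=set0.
Proof. case: gauge_ball => r r0 Hr; by exists (2 * (`|z| + 1) / r); apply: gauge_S. Qed.

Lemma gauge_lb z : has_lbound (S z).
Proof. by exists 0 => t [/ltW]. Qed.

Lemma gauge_ge0 z : 0 <= gauge_fun B z.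
Proof. by apply: lb_le_inf; [exact: gauge_ne | move=> t [/ltW]]. Qed.

Lemma gauge_le z t : S z t -> gauge_fun B z <= t.
Proof. by move=> St; apply: (ge_inf (gauge_lb z)). Qed.

Lemma gauge_adh z e : 0 < e -> exists2 t, S z t & t < gauge_fun B z + e.
Proof. by move=> e0; apply: inf_adherent => //; split; [exact: gauge_ne | exact: gauge_lb]. Qed.

Lemma gauge_scale s z : 0 < s -> gauge_fun B (s *: z) <= s * gauge_fun B z.
Proof.
move=> s0; apply/ler_addgt0Pr => e e0.
have [t [t0 [b Bb ->]] ht] := gauge_adh z (e / s) (divr_gt0 e0 s0).
apply: (le_trans (gauge_le _ (s * t) _)).
  by split; [rewrite mulr_gt0 | exists b => //; rewrite scalerA].
have : s * t < s * (gauge_fun B (t *: b) + e / s) by rewrite ltr_pM2l.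
by rewrite mulrDr mulrCA mulfV ?gt_eqF // mulr1 => /ltW.
Qed.

Lemma gauge_add x y : gauge_fun B (x + y) <= gauge_fun B x + gauge_fun B y.
Proof.
apply/ler_addgt0Pr => e e0.
have e2 : 0 < e / 2 by rewrite divr_gt0.
have [t1 [t10 [b1 Bb1 ->]] h1] := gauge_adh x (e / 2) e2.
have [t2 [t20 [b2 Bb2 ->]] h2] := gauge_adh y (e / 2) e2.
have t0 : 0 < t1 + t2 by rewrite addr_gt0.
apply: (le_trans (gauge_le _ (t1 + t2) _)).
  split => //; exists ((t1 / (t1 + t2)) *: b1 + (1 - t1 / (t1 + t2)) *: b2).
    case: hB => cB _ _; apply: cB => //.
    rewrite divr_ge0 ?ltW //= ?ltr_pdivrMr ?ler_pdivrMr // mul1r ?ltrDl ?lerDl ?ltW //.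
  apply/rowP => j; rewrite !mxE; field; rewrite gt_eqF //.
have := ltrD h1 h2; lra.
Qed.

Lemma gauge_scale_ge s z : 0 < s -> s * gauge_fun B z <= gauge_fun B (s *: z).
Proof.
move=> s0.
have h : gauge_fun B z <= s^-1 * gauge_fun B (s *: z).
  set y := s *: z.
  have -> : z = s^-1 *: y by rewrite /y scalerA mulVf ?gt_eqF // scale1r.
  by apply: gauge_scale; rewrite invr_gt0.
by rewrite -(ler_pM2l s0) mulrA mulfV ?gt_eqF // mul1r in h.
Qed.

End Gauge.

Theorem mainTheorem4 (R : realType) (d n : nat) (B : set 'rV[R]_d)
  (a : 'I_n -> 'rV[R]_d) (w : 'I_n -> R) (C : {set 'I_n})
  (v : 'rV[R]_d) (U : set 'rV[R]_d) :
  gauge_body B ->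
  SD (gauge_fun B) v ->
  injective a ->
  (forall i, 0 < w i) ->
  \sum_(i < n) w i = 1 ->
  \sum_(i < n | i \in C) w i > 1 / (1 + skewness (gauge_fun B)) ->
  bounded_set U ->
  exists2 M0 : R, 0 < M0 &
    forall M : R, M > M0 ->
    forall x : 'rV[R]_d,
      (forall y, fM (gauge_fun B) a w C v M x <= fM (gauge_fun B) a w C v M y) ->
      ~ U x.
Proof.
move=> hB [gv1 sg1] _ wpos wsum wC hU.
have [m Hm] : exists m : R, forall x, U x -> `|x| <= m.
  case: hU => m [_ Hm]; exists (m + 1) => x Ux; apply: (Hm (m+1)) => //; lra.
have [r r0 Hr] := gauge_ball _ _ _ hB.
set g := gauge_fun B in gv1 sg1 wC *.
set sig := skewness g in sg1 wC.
set wc := \sum_(i < n | i \in C) w i in wC.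
have wD : \sum_(i < n | i \notin C) w i = 1 - wc.
  rewrite -wsum [in RHS](bigID (fun i => i \in C)) /=; rewrite -/wc; lra.
have wc0 : 0 <= wc by apply: sumr_ge0 => i _; exact: ltW.
set gm := g (- v) in sg1.
have gm0 : 0 <= gm := gauge_ge0 _ _ _ hB _.
have gmpos : 0 < gm.
  rewrite lt_neqAle gm0 andbT; apply/eqP => h; move: sg1; rewrite -h mulr0.
  by move/eqP; rewrite eq_sym oner_eq0.
have sigpos : 0 < sig.
  have : 0 < sig * gm by rewrite sg1.
  by rewrite pmulr_lgt0.
have key : 0 < wc - gm * (1 - wc).
  have h1 : 1 < wc * (1 + sig) by rewrite -ltr_pdivrMr // addr_gt0.
  have -> : wc - gm * (1 - wc) = gm * (wc * (1 + sig) - 1) + wc * (1 - sig * gm).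
    by ring.
  rewrite sg1 subrr mulr0 addr0.
  by rewrite mulr_gt0 // subr_gt0.
set G := 2 * (`|m| + 1) / r.
have G0 : 0 <= G by rewrite divr_ge0 ?ltW // mulr_ge0 // addr_ge0.
have gG : forall x, U x -> g x <= G /\ g (- x) <= G.
  move=> x Ux.
  have hb : forall z : 'rV[R]_d, `|z| <= `|m| -> g z <= G.
    move=> z hz; apply: le_trans (gauge_le _ _ _ _ _ (gauge_S _ _ _ z r r0 Hr)) _.
    by rewrite ler_pM2r ?invr_gt0 // ler_pM2l // lerD2r.
  have hx : `|x| <= `|m| by apply: le_trans (Hm x Ux) (ler_norm m).
  split; apply: hb; first exact: hx.
  rewrite normrN. exact: hx.
set h := fun i => g (a i) + g (- a i).
set Q := \sum_(i < n | i \in C) w i * h i.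
have Q0 : 0 <= Q.
  apply: sumr_ge0 => i _; apply: mulr_ge0; first exact: ltW.
  by rewrite addr_ge0 // (gauge_ge0 _ _ _ hB).
set k := wc - gm * (1 - wc).
set t := (2 * G * wc + Q + 1) / k.
have tk : t * k = 2 * G * wc + Q + 1 by rewrite /t divfK // gt_eqF.
have tpos : 0 < t.
  rewrite divr_gt0 //; have : 0 <= 2 * G * wc by apply: mulr_ge0 => //; apply: mulr_ge0.
  lra.
exists t => // M Mt x hx Ux.
have := hx (x - t *: v); rewrite /fM.
set fD := \sum_(i < n | i \notin C) _.
set fC := \sum_(i < n | i \in C) _.
set fD' := \sum_(i < n | i \notin C) _.
set fC' := \sum_(i < n | i \in C) _.
have [gx gnx] := gG x Ux.
have hD : fD' <= fD + (1 - wc) * (t * gm).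
  rewrite /fD' /fD -wD big_distrl /= -big_split /=.
  apply: ler_sum => i _; rewrite -mulrDr ler_pM2l //.
  have -> : x - t *: v - a i = (x - a i) + t *: (- v) by rewrite scalerN addrAC.
  apply: le_trans (gauge_add _ _ _ hB _ _) _; rewrite lerD2l.
  exact: (gauge_scale _ _ _ hB).
have hC : fC' <= fC + (wc * (2 * G - t) + Q).
  rewrite /fC' /fC /Q /wc big_distrl /= -!big_split /=.
  apply: ler_sum => i _; rewrite -!mulrDr ler_pM2l //.
  have e1 : x - t *: v - (a i - M *: v) = (x - a i) + (M - t) *: v.
    by apply/rowP => j; rewrite !mxE; ring.
  have e2 : M *: v = (x - (a i - M *: v)) + (a i - x).
    by apply/rowP => j; rewrite !mxE; ring.
  have e3 : x - a i = x + (- a i) by [].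
  have e4 : a i - x = a i + (- x) by [].
  have i1 : g (x - t *: v - (a i - M *: v)) <= g (x - a i) + (M - t).
    rewrite e1; apply: le_trans (gauge_add _ _ _ hB _ _) _; rewrite lerD2l.
    by rewrite -[X in _ <= X]mulr1 -gv1; apply: (gauge_scale _ _ _ hB); rewrite subr_gt0.
  have i2 : M <= g (x - (a i - M *: v)) + g (a i - x).
    have : M * g v <= g (M *: v).
      by apply: (gauge_scale_ge _ _ _ hB); apply: lt_trans Mt.
    rewrite gv1 mulr1 => hM; apply: le_trans hM _.
    by rewrite {1}e2; exact: (gauge_add _ _ _ hB).
  have i3 : g (x - a i) <= g x + g (- a i) by exact: (gauge_add _ _ _ hB).
  have i4 : g (a i - x) <= g (a i) + g (- x) by exact: (gauge_add _ _ _ hB).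
  rewrite /h; lra.
have E : (1 - wc) * (t * gm) + (wc * (2 * G - t) + Q) = 2 * G * wc + Q - t * k.
  by rewrite /k; ring.
rewrite tk in E; lra.
Qed.
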